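(* Let $Q$ be a quasi-ribbon tableau and let $\xi(Q)$ be the array obtained from $Q$ by first sliding every row leftwards so that its leftmost cell lies in column $1$, and then sliding all cells upwards along their columns until each column has its topmost cell in row $1$ and no gaps. Then $\xi(Q)$ is a Young tableau, and for every $i\ge1$ such that $f_i(Q)$ is defined, $\xi(f_i(Q))=\tilde f_i(\xi(Q))$.
   Context: A quasi-ribbon tableau of shape $\sigma=(\sigma_1,\dots,\sigma_r)$ is a filling with positive integers of the diagram having $\sigma_i$ cells in row $i$, the leftmost cell of row $i+1$ directly below the rightmost cell of row $i$, weakly increasing along rows and strictly increasing down columns. A Young tableau is a left-justified array with weakly decreasing row lengths, filled with positive integers weakly increasing along rows and strictly increasing down columns. The column reading of a (quasi-ribbon or Young) tableau reads columns left to right, each bottom to top; operators act on tableaux via their column readings (the result is again the column reading of a tableau of the same shape). Quasi-Kashiwara operator $f_i$ on a word $u$: undefined if $u$ contains a (not necessarily consecutive) subsequence $(i+1)\,i$ or no letter $i$; otherwise replaces the rightmost $i$ by $i+1$. Kashiwara operator $\tilde f_i$: replace each $i$ by $+$, each $i+1$ by $-$, delete other letters, then repeatedly delete factors $-+$ until the word is $+^{a}-^{b}$; if $a=0$ undefined, otherwise change the letter $i$ corresponding to the rightmost remaining $+$ into $i+1$. *)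

(* Defs.v *)
From mathcomp Require Import all_boot.
Set Implicit Arguments. Unset Strict Implicit. Unset Printing Implicit Defensive.

(* An array is a list of rows, row i being (offset, entries): it occupies
   columns offset .. offset + size entries - 1 of row i (rows top to bottom). *)
Definition array := seq (nat * seq nat).

Definition cell_at (A : array) (i c : nat) : option nat :=
  let: (o, r) := nth (0, [::]) A i in
  if (o <= c) && (c < o + size r) then Some (nth 0 r (c - o)) else None.

Definition ncols (A : array) : nat := foldr maxn 0 [seq x.1 + size x.2 | x <- A].

Definition col_cells (A : array) (c : nat) : seq (nat * nat) :=
  [seq (i, c) | i <- rev (iota 0 (size A)) & cell_at A i c != None].

Definition reading_cells (A : array) : seq (nat * nat) :=
  flatten [seq col_cells A c | c <- iota 0 (ncols A)].

Definition col_reading (A : array) : seq nat :=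
  flatten [seq pmap (fun i => cell_at A i c) (rev (iota 0 (size A)))
          | c <- iota 0 (ncols A)].

(* the array of the same shape as A whose column reading is w *)
Definition refill (A : array) (w : seq nat) : array :=
  [seq (x.2.1, [seq nth 0 w (index (x.1, c) (reading_cells A))
               | c <- iota x.2.1 (size x.2.2)])
  | x <- zip (iota 0 (size A)) A].

Fixpoint qr_offsets (o : nat) (Q : seq (seq nat)) : seq nat :=
  if Q is r :: Q' then o :: qr_offsets (o + size r - 1) Q' else [::].

Definition qr_array (Q : seq (seq nat)) : array := zip (qr_offsets 0 Q) Q.

Definition is_qrt (Q : seq (seq nat)) : bool :=
  all (fun r => (r != [::]) && sorted leq r && all (fun x => 0 < x) r) Q &&
  (* the only column shared by rows i and i+1 holds last of row i above
     first of row i+1: strict increase down that column *)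
  sorted (fun r s => last 0 r < head 0 s) Q.

Definition young_array (T : seq (seq nat)) : array := [seq (0, r) | r <- T].

Definition is_young (T : seq (seq nat)) : bool :=
  all (fun r => (r != [::]) && sorted leq r && all (fun x => 0 < x) r) T &&
  sorted (fun r s => (size s <= size r) &&
                     all (fun j => nth 0 r j < nth 0 s j) (iota 0 (size s))) T.

Definition xi_cols (Q : seq (seq nat)) : seq (seq nat) :=
  [seq [seq nth 0 r j | r <- Q & j < size r]
  | j <- iota 0 (foldr maxn 0 (map size Q))].

Definition xi (Q : seq (seq nat)) : seq (seq nat) :=
  let C := xi_cols Q in
  [seq [seq nth 0 col k | col <- C & k < size col]
  | k <- iota 0 (foldr maxn 0 (map size C))].

Definition quasi_f_word (i : nat) (u : seq nat) : option (seq nat) :=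
  if subseq [:: i.+1; i] u || (i \notin u) then None
  else Some (rev (set_nth 0 (rev u) (index i (rev u)) i.+1)).

(* signed letters: (position, true = '+' for i, false = '-' for i+1) *)
Definition signs (i : nat) (u : seq nat) : seq (nat * bool) :=
  [seq (k, nth 0 u k == i) | k <- iota 0 (size u)
                           & (nth 0 u k == i) || (nth 0 u k == i.+1)].

(* delete the leftmost factor '-+' (if any) *)
Fixpoint del_mp (s : seq (nat * bool)) : seq (nat * bool) :=
  match s with
  | x :: s' =>
      if (~~ x.2) && (s' != [::]) && (head (0, false) s').2 then behead s'
      else x :: del_mp s'
  | [::] => [::]
  end.

Definition reduce_signs (s : seq (nat * bool)) := iter (size s) del_mp s.

Definition kashiwara_f_word (i : nat) (u : seq nat) : option (seq nat) :=
  let plus := [seq x.1 | x <- reduce_signs (signs i u) & x.2] in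
  if plus is [::] then None else Some (set_nth 0 u (last 0 plus) i.+1).

Definition qr_f (i : nat) (Q : seq (seq nat)) : option (seq (seq nat)) :=
  omap (fun w => map snd (refill (qr_array Q) w))
       (quasi_f_word i (col_reading (qr_array Q))).

Definition young_f (i : nat) (T : seq (seq nat)) : option (seq (seq nat)) :=
  omap (fun w => map snd (refill (young_array T) w))
       (kashiwara_f_word i (col_reading (young_array T))).

(* Main.v *)
Require Import Defs.
From mathcomp Require Import all_boot zify.
Set Implicit Arguments. Unset Strict Implicit. Unset Printing Implicit Defensive.

Definition val (A : array) (x : nat * nat) := odflt 0 (cell_at A x.1 x.2).
Definition ltc (x y : nat * nat) := (x.2 < y.2) || ((x.2 == y.2) && (y.1 < x.1)).

Lemma ltc_irr x : ltc x x = false.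
Proof. rewrite /ltc; lia. Qed.

Lemma ltc_asym x y : ltc x y -> ltc y x -> False.
Proof. rewrite /ltc; lia. Qed.

Lemma leq_foldr_maxn s x : x \in s -> x <= foldr maxn 0 s.
Proof.
elim: s => //= y s IH; rewrite in_cons => /orP [/eqP ->|/IH H]; first exact: leq_maxl.
exact: leq_trans H (leq_maxr _ _).
Qed.

Lemma foldr_maxn_gt s k : k < foldr maxn 0 s -> exists2 y, y \in s & k < y.
Proof.
elim: s => //= y s IH; rewrite leq_max => /orP [H|/IH [z Hz Hk]].
  by exists y; rewrite ?mem_head.
by exists z; rewrite // in_cons Hz orbT.
Qed.

Lemma col_reading_map A : col_reading A = map (val A) (reading_cells A).
Proof.
rewrite /col_reading /reading_cells map_flatten -map_comp; congr flatten.
apply: eq_map => c /=; rewrite /col_cells -map_comp.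
elim: (rev _) => //= i s IH; rewrite /val /=.
by case E: (cell_at A i c) => [v|] /=; rewrite IH // /val /= E.
Qed.

Lemma cell_some A m c : cell_at A m c != None ->
  [/\ m < size A, (nth (0, [::]) A m).1 <= c < (nth (0, [::]) A m).1 + size (nth (0, [::]) A m).2
   & c < ncols A].
Proof.
rewrite /cell_at; case: (ltnP m (size A)) => Hm; last by rewrite nth_default.
have Hin : nth (0, [::]) A m \in A by exact: mem_nth.
case E: (nth (0, [::]) A m) => [o r] /=; case: ifP => // /andP [H1 H2] _.
split => //.
apply: leq_trans H2 _; apply: leq_foldr_maxn; apply/mapP; exists (o, r) => //.
by rewrite -E.
Qed.

Lemma mem_rc A x : (x \in reading_cells A) = (cell_at A x.1 x.2 != None).
Proof.
case: x => m c /=; apply/flatten_mapP/idP.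
  move=> [c' _ /mapP [m' Hm' [-> ->]]]; by rewrite mem_filter in Hm'; case/andP: Hm'.
move=> H; have [Hm _ Hc] := cell_some H; exists c; first by rewrite mem_iota.
by apply/mapP; exists m => //; rewrite mem_filter H mem_rev mem_iota.
Qed.

Lemma rc_pairwise A : pairwise ltc (reading_cells A).
Proof.
rewrite /reading_cells.
have : pairwise ltn (iota 0 (ncols A)) by rewrite -sorted_pairwise ?iota_ltn_sorted //; exact: ltn_trans.
elim: (iota 0 _) => //= c s IH /andP [Hc Hs]; rewrite pairwise_cat IH // andbT.
apply/andP; split.
  apply/allrelP => x y /mapP [m _ ->] /flatten_mapP [c' Hc' /mapP [m' _ ->]].
  by rewrite /ltc /=; have := allP Hc c' Hc'; rewrite /= => ->.
rewrite pairwise_map; apply: pairwise_filter.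
have : pairwise (fun a b => b < a) (rev (iota 0 (size A))).
  have: sorted ltn (iota 0 (size A)) by exact: iota_ltn_sorted.
  rewrite -rev_sorted sorted_pairwise //; last by move=> a b d /= H1 H2; exact: ltn_trans H2 H1.
apply: sub_pairwise => a b /= H; by rewrite /ltc /= eqxx H orbT.
Qed.

Lemma rc_uniq A : uniq (reading_cells A).
Proof. apply: pairwise_uniq (rc_pairwise A) => x; exact: ltc_irr. Qed.

Lemma rc_index_lt A x y : x \in reading_cells A -> y \in reading_cells A ->
  ltc x y -> index x (reading_cells A) < index y (reading_cells A).
Proof.
move=> Hx Hy Hxy; case: (ltngtP (index x _) (index y _)) => // H.
  move/(pairwiseP (0, 0)): (rc_pairwise A) => P.
  have := P (index y (reading_cells A)) (index x (reading_cells A)).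
  rewrite !nth_index // !inE !index_mem => /(_ Hy Hx H) Hyx; case: (ltc_asym Hxy Hyx).
by have E := index_inj (0,0) Hx Hy H; rewrite E ltc_irr in Hxy.
Qed.

Lemma rc_nth_lt A n1 n2 : n1 < n2 < size (reading_cells A) ->
  ltc (nth (0,0) (reading_cells A) n1) (nth (0,0) (reading_cells A) n2).
Proof.
move=> /andP [H1 H2]; move/(pairwiseP (0, 0)): (rc_pairwise A) => P.
apply: P => //; rewrite inE //; exact: ltn_trans H1 H2.
Qed.

Lemma size_refill A w : size (map snd (refill A w)) = size A.
Proof. by rewrite /refill !size_map size_zip size_iota minnn. Qed.

Lemma refill_nth A w m : m < size A ->
  nth [::] (map snd (refill A w)) m =
  [seq nth 0 w (index (m, c) (reading_cells A))
  | c <- iota (nth (0, [::]) A m).1 (size (nth (0, [::]) A m).2)].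
Proof.
move=> Hm; rewrite (nth_map (0, [::])); last by rewrite size_map size_zip size_iota minnn.
rewrite /refill (nth_map (0, (0, [::]))); last by rewrite size_zip size_iota minnn.
by rewrite nth_zip ?size_iota // nth_iota.
Qed.

Lemma refill_set_val A n v x : n < size (reading_cells A) -> x \in reading_cells A ->
  nth 0 (set_nth 0 (col_reading A) n v) (index x (reading_cells A)) =
  if x == nth (0, 0) (reading_cells A) n then v else val A x.
Proof.
move=> Hn Hx; rewrite nth_set_nth /=.
case: eqP => [Ei|Ni].
  by rewrite -Ei nth_index // eqxx.
case: eqP => [Ex|_]; first by case: Ni; rewrite Ex index_uniq // rc_uniq.
by rewrite col_reading_map (nth_map (0,0)) ?index_mem // nth_index.
Qed.


Lemma subseq_pos (u : seq nat) m1 m2 : m1 < m2 < size u ->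
  subseq [:: nth 0 u m1; nth 0 u m2] u.
Proof.
move=> /andP [H1 H2]; rewrite -[X in subseq _ X](cat_take_drop m2 u) -cat1s.
apply: cat_subseq; rewrite sub1seq.
  have <- : nth 0 (take m2 u) m1 = nth 0 u m1 by rewrite nth_take.
  by apply: mem_nth; rewrite size_take H2.
have <- : nth 0 (drop m2 u) 0 = nth 0 u m2 by rewrite nth_drop addn0.
by apply: mem_nth; rewrite size_drop subn_gt0.
Qed.

Lemma rev_set_nth (u : seq nat) j v : j < size u ->
  rev (set_nth 0 (rev u) j v) = set_nth 0 u (size u - j.+1) v.
Proof.
move=> Hj; apply: (@eq_from_nth _ 0).
  by rewrite size_rev !size_set_nth size_rev; lia.
move=> k; rewrite size_rev size_set_nth size_rev => Hk.
have Hk' : k < size u by lia.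
have Em : maxn j.+1 (size u) = size u by lia.
rewrite nth_rev ?size_set_nth ?size_rev ?Em //.
rewrite !nth_set_nth /=.
rewrite nth_rev; last by lia.
have -> : (size u - (size u - k.+1).+1) = k by lia.
by congr (if _ then _ else _); apply/eqP/eqP; lia.
Qed.

Lemma quasi_f_pos u i n : n < size u -> nth 0 u n = i ->
  (forall m, n < m < size u -> nth 0 u m != i) ->
  ~~ subseq [:: i.+1; i] u ->
  quasi_f_word i u = Some (set_nth 0 u n i.+1).
Proof.
move=> Hn Hi Hl Hs; rewrite /quasi_f_word (negbTE Hs) /=.
have Hin : i \in u by rewrite -Hi mem_nth.
rewrite Hin /=; congr Some.
set j := index i (rev u).
have Hj : j < size u by rewrite -size_rev index_mem mem_rev.
rewrite rev_set_nth //; congr set_nth.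
have Hnj : nth 0 (rev u) j = i by rewrite nth_index // mem_rev.
rewrite nth_rev // in Hnj.
have H1 : size u - j.+1 <= n.
  case: (leqP (size u - j.+1) n) => // H.
  have := Hl (size u - j.+1); rewrite H Hnj eqxx /=; have -> : size u - j.+1 < size u by lia. by move/(_ isT).
have H2 : j <= size u - n.+1.
  case: (leqP j (size u - n.+1)) => // H.
  have := before_find 0 H; rewrite nth_rev; last by lia.
  have E : size u - (size u - n.+1).+1 = n by lia.
  by rewrite E Hi /= eqxx.
lia.
Qed.

Lemma del_mp_id (s : seq (nat * bool)) :
  pairwise (fun x y => x.2 || ~~ y.2) s -> del_mp s = s.
Proof.
elim: s => //= x s IH /andP [Ha Hp]; rewrite IH //.
case: s Ha {IH Hp} => [|y s] /=; first by rewrite andbF.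
by case/andP; case: (x.2); case: (y.2).
Qed.

Lemma iter_del_mp_id n (s : seq (nat * bool)) :
  pairwise (fun x y => x.2 || ~~ y.2) s -> iter n del_mp s = s.
Proof. by move=> H; elim: n => //= n ->; rewrite del_mp_id. Qed.

Lemma kf_pos u i n : n < size u -> nth 0 u n = i ->
  (forall m, n < m < size u -> nth 0 u m != i) ->
  (forall m1 m2, m1 < m2 < size u -> nth 0 u m1 = i.+1 -> nth 0 u m2 != i) ->
  kashiwara_f_word i u = Some (set_nth 0 u n i.+1).
Proof.
move=> Hn Hi Hl Hpm.
set P := fun k => (nth 0 u k == i) || (nth 0 u k == i.+1).
have Hpw : pairwise (fun x y : nat * bool => x.2 || ~~ y.2) (signs i u).
  rewrite /signs pairwise_map.
  have Hlt : pairwise ltn [seq k <- iota 0 (size u) | P k].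
    apply: pairwise_filter; rewrite -sorted_pairwise ?iota_ltn_sorted //; exact: ltn_trans.
  apply: (sub_in_pairwise (P := fun k => (k < size u) && P k)) Hlt.
    move=> a b /andP [Ha Pa] /andP [Hb Pb] /= Hab.
    case: eqP => //= Hai; apply/negP => /eqP Hbi.
    have : nth 0 u a = i.+1 by move: Pa; rewrite /P; case: eqP => //= _ /eqP.
    by move/(Hpm a b); rewrite Hab Hb Hbi eqxx => /(_ isT).
  by apply/allP => k; rewrite mem_filter mem_iota /= => /andP [-> ->].
have Hplus : [seq x.1 | x <- reduce_signs (signs i u) & x.2]
             = [seq k <- iota 0 (size u) | nth 0 u k == i].
  rewrite /reduce_signs iter_del_mp_id // /signs filter_map -map_comp map_id_in //.
  rewrite -filter_predI; apply: eq_filter => k /=; rewrite /P; by case: eqP.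
have Hsplit : iota 0 (size u) = iota 0 n ++ [:: n] ++ iota n.+1 (size u - n.+1).
  have E : size u = n + (1 + (size u - n.+1)) by lia.
  by rewrite {1}E !iotaD add0n addn1.
have Hnil : [seq k <- iota n.+1 (size u - n.+1) | nth 0 u k == i] = [::].
  rewrite (eq_in_filter (a2 := pred0)) ?filter_pred0 // => k; rewrite mem_iota => Hk.
  by apply/negbTE/Hl; lia.
rewrite /kashiwara_f_word Hplus Hsplit !filter_cat Hnil cats0 /= Hi eqxx.
case: [seq k <- iota 0 n | _] => //= x l.
by rewrite last_cat.
Qed.


Definition rowsS (S : seq nat) j := [seq m <- iota 0 (size S) | j < nth 0 S m].
Definition csS S j := size (rowsS S j).
Definition NS (S : seq nat) := foldr maxn 0 S.
Definition MS S := foldr maxn 0 [seq csS S j | j <- iota 0 (NS S)].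
Definition LkS S k := count (fun j => k < csS S j) (iota 0 (NS S)).
Definition sel S j k := nth 0 (rowsS S j) k.

Lemma nth_size (Q : seq (seq nat)) m : nth 0 (map size Q) m = size (nth [::] Q m).
Proof.
case: (ltnP m (size Q)) => H; first by rewrite (nth_map [::]).
by rewrite !nth_default ?size_map.
Qed.

Lemma xi_cols_eq Q : xi_cols Q =
  [seq [seq nth 0 (nth [::] Q m) j | m <- rowsS (map size Q) j] | j <- iota 0 (NS (map size Q))].
Proof.
rewrite /xi_cols /NS; apply: eq_map => j; rewrite /rowsS size_map.
rewrite -{1}(mkseq_nth [::] Q) /mkseq filter_map -map_comp.
congr map; apply: eq_filter => m /=; by rewrite nth_size.
Qed.

Lemma cs_dec S j : csS S j.+1 <= csS S j.
Proof. rewrite /csS /rowsS !size_filter; apply: sub_count => m /=; exact: ltnW. Qed.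

Lemma cs_down S j j' : j <= j' -> csS S j' <= csS S j.
Proof.
move=> H; elim: j' H => [|j' IH]; first by rewrite leqn0 => /eqP ->.
rewrite leq_eqVlt => /orP [/eqP -> //|H]; exact: leq_trans (cs_dec S j') (IH H).
Qed.

Lemma filter_iota_down (P : pred nat) N : (forall j, P j.+1 -> P j) ->
  filter P (iota 0 N) = iota 0 (count P (iota 0 N)).
Proof.
move=> HP; elim: N => // N IH.
rewrite -addn1 iotaD filter_cat count_cat IH /= add0n.
case HN: (P N) => /=.
  have Hall : forall j, j <= N -> P j.
    move=> j Hj; elim: N j Hj HN {IH} => [|N IHN] j Hj HN; first by move: Hj; rewrite leqn0 => /eqP ->.
    move: Hj; rewrite leq_eqVlt => /orP [/eqP -> //|Hj]; exact: IHN _ Hj (HP _ HN).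
  have -> : count P (iota 0 N) = N.
    rewrite (eq_in_count (a2 := predT)) ?count_predT ?size_iota // => j.
    rewrite mem_iota => /andP [_ Hj]; apply: Hall; exact: ltnW.
  by rewrite iotaD.
by rewrite cats0 !addn0.
Qed.

Lemma Lk_filter S k : filter (fun j => k < csS S j) (iota 0 (NS S)) = iota 0 (LkS S k).
Proof. apply: filter_iota_down => j H; exact: leq_trans H (cs_dec S j). Qed.

Lemma Lk_lt S k j : (j < LkS S k) = (k < csS S j) && (j < NS S).
Proof.
have := Lk_filter S k; move/(congr1 (fun s => j \in s)).
by rewrite mem_filter !mem_iota /= add0n => <-.
Qed.

Lemma xi_eq Q : xi Q =
  [seq [seq nth 0 (nth [::] Q (sel (map size Q) j k)) j | j <- iota 0 (LkS (map size Q) k)]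
  | k <- iota 0 (MS (map size Q))].
Proof.
rewrite /xi xi_cols_eq; set S := map size Q.
have Hsz : [seq size col | col <- [seq [seq nth 0 (nth [::] Q m) j | m <- rowsS S j] | j <- iota 0 (NS S)]]
   = [seq csS S j | j <- iota 0 (NS S)].
  by rewrite -map_comp; apply: eq_map => j; rewrite /= size_map.
rewrite Hsz; apply: eq_map => k; rewrite filter_map -map_comp.
have Hf : [seq j <- iota 0 (NS S) | preim (fun j => [seq nth 0 (nth [::] Q m) j | m <- rowsS S j])
             (fun col => k < size col) j] = iota 0 (LkS S k).
  rewrite -Lk_filter; apply: eq_filter => j /=; by rewrite size_map.
rewrite -Hf; apply/eq_in_map => j; rewrite mem_filter /= size_map => /andP [Hk _].
by rewrite (nth_map 0).
Qed.

Lemma size_xi Q : size (xi Q) = MS (map size Q).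
Proof. by rewrite xi_eq size_map size_iota. Qed.

Lemma nth_xi Q k : k < MS (map size Q) -> nth [::] (xi Q) k =
  [seq nth 0 (nth [::] Q (sel (map size Q) j k)) j | j <- iota 0 (LkS (map size Q) k)].
Proof. by move=> Hk; rewrite xi_eq (nth_map 0) ?size_iota // nth_iota. Qed.

Lemma size_nth_xi Q k : k < MS (map size Q) -> size (nth [::] (xi Q) k) = LkS (map size Q) k.
Proof. by move=> Hk; rewrite nth_xi // size_map size_iota. Qed.

Lemma entry_xi Q k j : k < MS (map size Q) -> j < LkS (map size Q) k ->
  nth 0 (nth [::] (xi Q) k) j = nth 0 (nth [::] Q (sel (map size Q) j k)) j.
Proof. by move=> Hk Hj; rewrite nth_xi // (nth_map 0) ?size_iota // nth_iota. Qed.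

Lemma rows_mem S j m : (m \in rowsS S j) = (m < size S) && (j < nth 0 S m).
Proof. by rewrite mem_filter mem_iota andbC. Qed.

Lemma sel_prop S j k : k < csS S j -> (sel S j k < size S) && (j < nth 0 S (sel S j k)).
Proof. by move=> H; rewrite -rows_mem mem_nth. Qed.

Lemma rows_sorted S j : sorted ltn (rowsS S j).
Proof. apply: sorted_filter; [exact: ltn_trans | exact: iota_ltn_sorted]. Qed.

Lemma sel_mono S j k1 k2 : k1 < k2 -> k2 < csS S j -> sel S j k1 < sel S j k2.
Proof.
move=> H1 H2; apply: (sorted_ltn_nth ltn_trans 0 (rows_sorted S j)) => //; rewrite inE //.
exact: ltn_trans H1 H2.
Qed.

Lemma nth_filter_ge (P : pred nat) t k : sorted ltn t -> k < size (filter P t) ->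
  nth 0 t k <= nth 0 (filter P t) k.
Proof.
elim: t k => //= x t IH k Hs.
have Ht := path_sorted Hs.
case: (P x) => /=.
  case: k => [|k] //= Hk; exact: IH.
move=> Hk; apply: leq_trans (IH k Ht Hk).
have Hsz : k < size t by apply: leq_trans Hk _; rewrite size_filter count_size.
case: k Hk Hsz => [|k] Hk Hsz /=.
  by case: t Hs {IH Ht Hk} Hsz => //= y t /andP [Hxy _] _; exact: ltnW.
apply: ltnW; apply: (sorted_ltn_nth ltn_trans 0 Ht) => //; rewrite inE /=; lia.
Qed.

Lemma sel_succ S j k : k < csS S j.+1 -> sel S j k <= sel S j.+1 k.
Proof.
move=> Hk.
have E : rowsS S j.+1 = filter (fun m => j.+1 < nth 0 S m) (rowsS S j).
  rewrite /rowsS -filter_predI; apply: eq_filter => m /=; case: ltnP => //= H.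
  by rewrite ltnW.
rewrite /sel E; apply: nth_filter_ge; first exact: rows_sorted.
by rewrite -E.
Qed.

Lemma sel_index S j k : k < csS S j -> index (sel S j k) (rowsS S j) = k.
Proof. move=> H; apply: index_uniq => //; apply: filter_uniq; exact: iota_uniq. Qed.

Lemma MS_gt S j k : k < csS S j -> j < NS S -> k < MS S.
Proof.
move=> H1 H2; apply: leq_trans H1 _; apply: leq_foldr_maxn; apply: map_f.
by rewrite mem_iota.
Qed.

Lemma Lk_pos S k : k < MS S -> 0 < LkS S k.
Proof.
move=> /foldr_maxn_gt [y /mapP [j Hj ->] Hk].
apply: (@leq_ltn_trans j) => //; rewrite Lk_lt Hk /=; by rewrite mem_iota in Hj.
Qed.

Lemma Lk_dec S k : LkS S k.+1 <= LkS S k.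
Proof. apply: sub_count => j /=; exact: ltnW. Qed.


Lemma cell_atE A m c : cell_at A m c =
  if ((nth (0, [::]) A m).1 <= c < (nth (0, [::]) A m).1 + size (nth (0, [::]) A m).2)
  then Some (nth 0 (nth (0, [::]) A m).2 (c - (nth (0, [::]) A m).1)) else None.
Proof. by rewrite /cell_at; case: nth. Qed.

Lemma rc_cell A x : x \in reading_cells A ->
  [/\ x.1 < size A,
      (nth (0, [::]) A x.1).1 <= x.2 < (nth (0, [::]) A x.1).1 + size (nth (0, [::]) A x.1).2
    & val A x = nth 0 (nth (0, [::]) A x.1).2 (x.2 - (nth (0, [::]) A x.1).1)].
Proof.
rewrite mem_rc => H; have [H1 H2 _] := cell_some H; split => //.
by rewrite /val cell_atE H2.
Qed.

Lemma rc_cellP A m c : m < size A ->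
  (nth (0, [::]) A m).1 <= c < (nth (0, [::]) A m).1 + size (nth (0, [::]) A m).2 ->
  (m, c) \in reading_cells A /\ val A (m, c) = nth 0 (nth (0, [::]) A m).2 (c - (nth (0, [::]) A m).1).
Proof. by move=> Hm Hc; rewrite mem_rc /val /= cell_atE Hc. Qed.

Lemma sorted_le_last (r : seq nat) x : sorted leq r -> x \in r -> x <= last 0 r.
Proof.
move=> Hs Hx; rewrite -nth_last -(nth_index 0 Hx).
have Hi : index x r < size r by rewrite index_mem.
apply: (sorted_leq_nth leq_trans leqnn 0 Hs); rewrite ?inE //; lia.
Qed.

Lemma sorted_head_le (r : seq nat) x : sorted leq r -> x \in r -> head 0 r <= x.
Proof.
move=> Hs Hx; rewrite -nth0 -(nth_index 0 Hx).
have Hi : index x r < size r by rewrite index_mem.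
apply: (sorted_leq_nth leq_trans leqnn 0 Hs); rewrite ?inE //; lia.
Qed.


Lemma qrt_rows Q (Hq : is_qrt Q) m : m < size Q ->
  [/\ nth [::] Q m != [::], sorted leq (nth [::] Q m) & all (fun x => 0 < x) (nth [::] Q m)].
Proof.
case/andP: Hq => /allP H _ Hm; have := H _ (mem_nth [::] Hm).
by case/andP => /andP [? ?] ?.
Qed.

Lemma qrt_row_le Q (Hq : is_qrt Q) m j1 j2 : m < size Q -> j1 <= j2 -> j2 < size (nth [::] Q m) ->
  nth 0 (nth [::] Q m) j1 <= nth 0 (nth [::] Q m) j2.
Proof.
move=> Hm H12 H2; have [_ Hs _] := qrt_rows Hq Hm.
apply: (sorted_leq_nth leq_trans leqnn 0 Hs) => //; rewrite inE //; exact: leq_ltn_trans H12 H2.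
Qed.

Lemma qrt_lt Q (Hq : is_qrt Q) m1 m2 j1 j2 : m1 < m2 -> m2 < size Q ->
  j1 < size (nth [::] Q m1) -> j2 < size (nth [::] Q m2) ->
  nth 0 (nth [::] Q m1) j1 < nth 0 (nth [::] Q m2) j2.
Proof.
move=> H12 H2 Hj1 Hj2.
pose P := fun r : seq nat => (r != [::]) && sorted leq r && all (fun x => 0 < x) r.
pose R := fun r s : seq nat => all (fun x => all (fun y => x < y) s) r.
case/andP: Hq => HP Hs.
have HR : sorted R Q.
  apply: (sub_in_sorted _ HP Hs) => r s /andP [/andP [_ Hr] _] /andP [/andP [_ Hs'] _] /= Hlt.
  apply/allP => x Hx; apply/allP => y Hy.
  exact: leq_ltn_trans (sorted_le_last Hr Hx) (leq_trans Hlt (sorted_head_le Hs' Hy)).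
have HRp : pairwise R Q.
  rewrite -(sorted_pairwise_in (P := P)) //.
  move=> s r t /andP [/andP [Hs0 _] _] _ _ Hrs Hst; apply/allP => x Hx; apply/allP => z Hz.
  case: s Hs0 Hrs Hst => // y s _ Hrs Hst.
  apply: (@ltn_trans y).
    by have := allP Hrs x Hx; move=> /allP; apply; rewrite mem_head.
  by have := allP Hst y (mem_head _ _); move=> /allP; apply.
move/(pairwiseP [::]): HRp => HRp.
have := HRp m1 m2; rewrite !inE => /(_ (ltn_trans H12 H2) H2 H12) HRm.
have := allP HRm _ (mem_nth 0 Hj1); move=> /allP; apply; exact: mem_nth.
Qed.


Lemma size_qr_offsets o Q : size (qr_offsets o Q) = size Q.
Proof. by elim: Q o => //= r Q IH o; rewrite IH. Qed.

Definition offQ Q m := nth 0 (qr_offsets 0 Q) m.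

Lemma off_succ_gen o Q m : m.+1 < size Q ->
  nth 0 (qr_offsets o Q) m.+1 = nth 0 (qr_offsets o Q) m + size (nth [::] Q m) - 1.
Proof.
elim: Q o m => //= r Q IH o [|m] /= H; first by case: Q H {IH}.
exact: IH.
Qed.

Lemma qr_nth Q m : m < size Q -> nth (0, [::]) (qr_array Q) m = (offQ Q m, nth [::] Q m).
Proof. by move=> Hm; rewrite /qr_array nth_zip // size_qr_offsets. Qed.

Lemma size_qr Q : size (qr_array Q) = size Q.
Proof. by rewrite /qr_array size_zip size_qr_offsets minnn. Qed.

Lemma young_nth T k : k < size T -> nth (0, [::]) (young_array T) k = (0, nth [::] T k).
Proof. by move=> Hk; rewrite /young_array (nth_map [::]). Qed.

Lemma size_young T : size (young_array T) = size T.
Proof. by rewrite size_map. Qed.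


Lemma xi_young Q : is_qrt Q -> is_young (xi Q).
Proof.
move=> Hq; set S := map size Q.
apply/andP; split.
  apply/allP => r /(nthP [::]) [k Hk <-]; rewrite size_xi in Hk.
  rewrite -size_eq0 size_nth_xi // -lt0n Lk_pos //=.
  apply/andP; split.
    apply/(sortedP 0) => j; rewrite size_nth_xi // => Hj.
    rewrite !entry_xi //; last exact: ltnW.
    move: Hj; rewrite Lk_lt => /andP [Hkc HjN].
    have Hkc' : k < csS S j := leq_trans Hkc (cs_dec S j).
    have /andP [Hm2 Hj2] := sel_prop Hkc.
    have /andP [Hm1 Hj1] := sel_prop Hkc'.
    rewrite /S size_map !nth_size in Hm2 Hj2 Hm1 Hj1.
    have := sel_succ Hkc; rewrite leq_eqVlt => /orP [/eqP E|Hlt].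
      rewrite -/S E; apply: qrt_row_le => //.
    apply: ltnW; apply: qrt_lt => //; exact: ltnW.
  apply/allP => x /(nthP 0) [j Hj <-]; rewrite size_nth_xi // in Hj.
  rewrite entry_xi //.
  move: (Hj); rewrite Lk_lt => /andP [Hkc _].
  have /andP [Hm Hjm] := sel_prop Hkc; rewrite /S size_map !nth_size in Hm Hjm.
  have [_ _ Hpos] := qrt_rows Hq Hm; apply: (allP Hpos); exact: mem_nth.
apply/(sortedP [::]) => k; rewrite size_xi => Hk.
have Hk' : k < MS S := ltnW Hk.
rewrite !size_nth_xi // Lk_dec /=.
apply/allP => j; rewrite mem_iota add0n => /= Hj.
have Hj' : j < LkS S k := leq_trans Hj (Lk_dec S k).
rewrite !entry_xi //.
move: Hj; rewrite Lk_lt => /andP [Hkc _].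
have /andP [Hm2 Hj2] := sel_prop Hkc.
have Hkc' : k < csS S j := ltnW Hkc.
have /andP [Hm1 Hj1] := sel_prop Hkc'.
rewrite /S size_map !nth_size in Hm2 Hj2 Hm1 Hj1.
apply: qrt_lt => //; exact: sel_mono.
Qed.


Lemma main_part2 Q i : is_qrt Q -> qr_f i Q != None ->
  omap xi (qr_f i Q) = young_f i (xi Q).
Proof.
move=> Hq Hdef.
have Hu : col_reading (qr_array Q) = map (val (qr_array Q)) (reading_cells (qr_array Q)).
  exact: col_reading_map.
have [Hns Hin] : ~~ subseq [:: i.+1; i] (col_reading (qr_array Q)) /\ i \in col_reading (qr_array Q).
  move: Hdef; rewrite /qr_f /quasi_f_word; case: ifP => //= /norP [H1 H2] _.
  by split => //; rewrite negbK in H2.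
have [a [j0 [Ha Hj0 Haj0]]] : exists a j0, [/\ a < size Q, j0 < size (nth [::] Q a)
                                    & nth 0 (nth [::] Q a) j0 = i].
  move: Hin; rewrite Hu => /mapP [x Hx ->].
  case: x Hx => m c Hx.
  have [/= H1 H2 H3] := rc_cell Hx; rewrite size_qr in H1; rewrite qr_nth //= in H2 H3.
  exists m, (c - offQ Q m); split => //; case/andP: H2 => H2a H2b; lia.
pose P := fun j => (j < size (nth [::] Q a)) && (nth 0 (nth [::] Q a) j == i).
have exP : exists j, P j by exists j0; rewrite /P Hj0 Haj0 eqxx.
have ubP : forall j, P j -> j <= size (nth [::] Q a) by move=> j /andP [H _]; exact: ltnW.
case: (ex_maxnP exP ubP) => p /andP [Hp /eqP Hpi] Hmax.
have Hi_cell : forall m j, m < size Q -> j < size (nth [::] Q m) ->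
    nth 0 (nth [::] Q m) j = i -> m = a /\ j <= p.
  move=> m j Hm Hj Hv; case: (ltngtP m a) => Hma.
  - by have := qrt_lt Hq Hma Ha Hj Hp; rewrite Hv Hpi ltnn.
  - by have := qrt_lt Hq Hma Hm Hp Hj; rewrite Hv Hpi ltnn.
  - by subst m; split => //; apply: Hmax; rewrite /P Hj Hv eqxx.
have Hi1_cell : forall m j, m < size Q -> j < size (nth [::] Q m) ->
    nth 0 (nth [::] Q m) j = i.+1 -> m = a /\ p < j.
  move=> m j Hm Hj Hv; case: (ltngtP m a) => Hma.
  - by have := qrt_lt Hq Hma Ha Hj Hp; rewrite Hv Hpi; lia.
  - exfalso.
    have Ha1 : a.+1 < size Q by exact: leq_ltn_trans Hma Hm.
    have [Hne _ _] := qrt_rows Hq Ha1.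
    have H0 : 0 < size (nth [::] Q a.+1) by rewrite lt0n size_eq0.
    have Hh1 := qrt_lt Hq (ltnSn a) Ha1 Hp H0.
    rewrite Hpi in Hh1.
    case: (ltngtP a.+1 m) => Hm1.
    + by have := qrt_lt Hq Hm1 Hm H0 Hj; rewrite Hv; lia.
    + lia.
    + subst m.
      have Hh2 := qrt_row_le Hq Ha1 (leq0n j) Hj; rewrite Hv in Hh2.
      set l := size (nth [::] Q a) - 1.
      have Hl : l < size (nth [::] Q a) by rewrite /l; lia.
      have Hpl : p <= l by rewrite /l; lia.
      have Hl1 := qrt_row_le Hq Ha Hpl Hl; rewrite Hpi in Hl1.
      have Hl2 := qrt_lt Hq (ltnSn a) Ha1 Hl H0.
      set c := offQ Q a.+1.
      have Hc : c = offQ Q a + size (nth [::] Q a) - 1 by rewrite /c /offQ off_succ_gen.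
      have [Hy1 Hv1] : (a.+1, c) \in reading_cells (qr_array Q) /\
                       val (qr_array Q) (a.+1, c) = nth 0 (nth [::] Q a.+1) (c - offQ Q a.+1).
        have := @rc_cellP (qr_array Q) a.+1 c.
        by rewrite size_qr qr_nth //= => /(_ Ha1); apply; rewrite /c leqnn /=; lia.
      rewrite /c subnn in Hv1.
      have [Hy2 Hv2] : (a, c) \in reading_cells (qr_array Q) /\
                       val (qr_array Q) (a, c) = nth 0 (nth [::] Q a) l.
        have := @rc_cellP (qr_array Q) a c; rewrite size_qr qr_nth //= => /(_ Ha).
        have -> : l = c - offQ Q a by rewrite Hc /l; lia.
        by apply; lia.
      have Hlt := rc_index_lt Hy1 Hy2.
      have : ltc (a.+1, c) (a, c) by rewrite /ltc /= eqxx ltnSn orbT.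
      move/Hlt => Hidx.
      have Hsz : index (a, c) (reading_cells (qr_array Q)) < size (col_reading (qr_array Q)).
        by rewrite Hu size_map index_mem.
      have := subseq_pos (u := col_reading (qr_array Q)) (m1 := index (a.+1, c) (reading_cells (qr_array Q)))
                 (m2 := index (a, c) (reading_cells (qr_array Q))).
      rewrite Hidx Hsz => /(_ isT).
      rewrite Hu !(nth_map (0, 0)) ?index_mem // !nth_index // Hv1 Hv2.
      have -> : nth 0 (nth [::] Q a.+1) 0 = i.+1 by lia.
      have -> : nth 0 (nth [::] Q a) l = i by lia.
      by rewrite -Hu (negbTE Hns).
  - subst m; split => //; case: (leqP j p) => // Hjp.
    by have := qrt_row_le Hq Ha Hjp Hp; rewrite Hv Hpi; lia.
set rc := reading_cells (qr_array Q).
set u := col_reading (qr_array Q).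
set xA := (a, offQ Q a + p).
have [HxA HvA] : xA \in rc /\ val (qr_array Q) xA = nth 0 (nth [::] Q a) (offQ Q a + p - offQ Q a).
  have := @rc_cellP (qr_array Q) a (offQ Q a + p).
  by rewrite size_qr qr_nth //= => /(_ Ha); apply; lia.
rewrite addKn Hpi in HvA.
set nA := index xA rc.
have HnA : nA < size u by rewrite /u Hu size_map index_mem.
have HuA : nth 0 u nA = i by rewrite /u Hu (nth_map (0, 0)) ?index_mem // nth_index.
have HlastA : forall m, nA < m < size u -> nth 0 u m != i.
  move=> m /andP [H1 H2]; rewrite /u Hu size_map in H2 *.
  rewrite (nth_map (0, 0)) //.
  have Hy : nth (0, 0) rc m \in rc by exact: mem_nth.
  have Hlt := rc_nth_lt (A := qr_array Q) (n1 := nA) (n2 := m); rewrite H1 H2 /= in Hlt.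
  move: (Hlt isT); rewrite nth_index //.
  case: (nth (0, 0) rc m) Hy => m' c Hy Hltc.
  have [/= H1' H2' H3'] := rc_cell Hy; rewrite size_qr in H1'; rewrite qr_nth //= in H2' H3'.
  rewrite H3'; apply/eqP => Hv.
  case/andP: H2' => H2a H2b.
  have [Ema Hle] := Hi_cell m' (c - offQ Q m') H1' ltac:(lia) Hv.
  subst m'; move: Hltc; rewrite /ltc /=; lia.
have Hqf : quasi_f_word i u = Some (set_nth 0 u nA i.+1) by apply: quasi_f_pos.
have HQ : qr_f i Q = Some (map snd (refill (qr_array Q) (set_nth 0 u nA i.+1))).
  by rewrite /qr_f -/u Hqf.
set Q' := map snd (refill (qr_array Q) (set_nth 0 u nA i.+1)).
have HQ'sz : size Q' = size Q by rewrite /Q' size_refill size_qr.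
have HQ'row : forall m, m < size Q -> nth [::] Q' m =
    [seq (if (m == a) && (j == p) then i.+1 else nth 0 (nth [::] Q m) j)
    | j <- iota 0 (size (nth [::] Q m))].
  move=> m Hm; rewrite refill_nth ?size_qr // qr_nth //=.
  rewrite -{1}(addn0 (offQ Q m)) iotaDl -map_comp; apply/eq_in_map => j; rewrite mem_iota /= => Hj.
  have [Hc Hv] : (m, offQ Q m + j) \in rc /\
       val (qr_array Q) (m, offQ Q m + j) = nth 0 (nth [::] Q m) (offQ Q m + j - offQ Q m).
    have := @rc_cellP (qr_array Q) m (offQ Q m + j).
    by rewrite size_qr qr_nth //= => /(_ Hm); apply; lia.
  rewrite refill_set_val -/rc ?index_mem // nth_index // Hv addKn.
  rewrite /xA xpair_eqE; case: (eqVneq m a) => [->|] //=.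
  by rewrite eqn_add2l.
have HQ'size : map size Q' = map size Q.
  apply: (@eq_from_nth _ 0); first by rewrite (size_map size Q') (size_map size Q) HQ'sz.
  rewrite (size_map size Q') => m Hm; rewrite HQ'sz in Hm.
  by rewrite !nth_size HQ'row // size_map size_iota.
have HQ'entry : forall m j, m < size Q -> j < size (nth [::] Q m) ->
    nth 0 (nth [::] Q' m) j = if (m == a) && (j == p) then i.+1 else nth 0 (nth [::] Q m) j.
  by move=> m j Hm Hj; rewrite HQ'row // (nth_map 0) ?size_iota // nth_iota.
rewrite HQ /=.
set S := map size Q.
set T := xi Q.
set B := young_array T.
set rcB := reading_cells B.
set uB := col_reading B.
have HuB : uB = map (val B) rcB by exact: col_reading_map.
have HTsz : size T = MS S by rewrite /T size_xi.
have HBcell : forall z, z \in rcB -> [/\ z.1 < MS S, z.2 < LkS S z.1,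
     z.1 < csS S z.2, z.2 < NS S
   & val B z = nth 0 (nth [::] Q (sel S z.2 z.1)) z.2].
  move=> [k j] Hz; have [/= H1 H2 H3] := rc_cell Hz.
  rewrite size_young HTsz in H1; rewrite young_nth ?HTsz //= in H2 H3.
  rewrite /T size_nth_xi // in H2.
  have Hj : j < LkS S k by rewrite add0n -/S in H2.
  have /andP [Hc HN] : (k < csS S j) && (j < NS S) by rewrite -Lk_lt.
  by split => //; rewrite H3 subn0 /T entry_xi.
have HBcellP : forall k j, k < MS S -> j < LkS S k -> (k, j) \in rcB /\
     val B (k, j) = nth 0 (nth [::] Q (sel S j k)) j.
  move=> k j Hk Hj; have := @rc_cellP B k j.
  rewrite size_young HTsz young_nth ?HTsz //= /T size_nth_xi // => /(_ Hk).
  case=> [|-> ->]; first by rewrite add0n -/S Hj.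
  by rewrite subn0 entry_xi.
have Hsel : forall k j, k < csS S j -> sel S j k < size Q /\ j < size (nth [::] Q (sel S j k)).
  by move=> k j /sel_prop /andP []; rewrite /S size_map nth_size.
have HaR : a \in rowsS S p by rewrite rows_mem /S size_map Ha nth_size.
set k0 := index a (rowsS S p).
have Hk0c : k0 < csS S p by rewrite /k0 index_mem.
have Hselk0 : sel S p k0 = a by rewrite /sel /k0 nth_index.
have HpN : p < NS S.
  apply: leq_trans Hp _; apply: leq_foldr_maxn; rewrite /S; apply: map_f; exact: mem_nth.
have Hk0M : k0 < MS S := MS_gt Hk0c HpN.
have Hpk0 : p < LkS S k0 by rewrite Lk_lt Hk0c HpN.
set y0 := (k0, p).
have [Hy0 Hvy0] := HBcellP k0 p Hk0M Hpk0.
rewrite Hselk0 Hpi in Hvy0.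
have HvalB_i : forall z, z \in rcB -> val B z = i -> z.2 < p \/ z = y0.
  move=> [k j] Hz Hv; have [/= Hk Hj Hc HN Hval] := HBcell _ Hz.
  have [Hm Hjm] := Hsel _ _ Hc.
  rewrite Hval in Hv; have [Ea Hjp] := Hi_cell _ _ Hm Hjm Hv.
  case: (ltngtP j p) => Hjp'; [by left | lia | right].
  subst j; congr pair; by rewrite /k0 -Ea sel_index.
have HvalB_i1 : forall z, z \in rcB -> val B z = i.+1 -> p < z.2.
  move=> [k j] Hz Hv; have [/= Hk Hj Hc HN Hval] := HBcell _ Hz.
  have [Hm Hjm] := Hsel _ _ Hc.
  rewrite Hval in Hv; by have [_ ->] := Hi1_cell _ _ Hm Hjm Hv.
set nB := index y0 rcB.
have HnB : nB < size uB by rewrite HuB size_map index_mem.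
have HuBn : nth 0 uB nB = i by rewrite HuB (nth_map (0, 0)) ?index_mem // nth_index.
have HlastB : forall m, nB < m < size uB -> nth 0 uB m != i.
  move=> m /andP [H1 H2]; rewrite HuB size_map in H2 *.
  rewrite (nth_map (0, 0)) //.
  have Hz : nth (0, 0) rcB m \in rcB by exact: mem_nth.
  have Hlt := rc_nth_lt (A := B) (n1 := nB) (n2 := m); rewrite H1 H2 /= in Hlt.
  move: (Hlt isT); rewrite nth_index //.
  move=> Hltc; apply/eqP => Hv; case: (HvalB_i _ Hz Hv) => [Hzp|Hzy].
    by move: Hltc Hzp; rewrite -/rcB; case: (nth _ rcB m) => k j; rewrite /ltc /y0 /=; lia.
  by rewrite Hzy ltc_irr in Hltc.
have HpmB : forall m1 m2, m1 < m2 < size uB -> nth 0 uB m1 = i.+1 -> nth 0 uB m2 != i.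
  move=> m1 m2 /andP [H1 H2]; rewrite HuB size_map in H2 *.
  have H1' : m1 < size rcB := ltn_trans H1 H2.
  rewrite !(nth_map (0, 0)) // => Hv1; apply/eqP => Hv2.
  have Hz1 : nth (0, 0) rcB m1 \in rcB by exact: mem_nth.
  have Hz2 : nth (0, 0) rcB m2 \in rcB by exact: mem_nth.
  have Hlt := rc_nth_lt (A := B) (n1 := m1) (n2 := m2); rewrite H1 H2 /= in Hlt.
  have Hp1 := HvalB_i1 _ Hz1 Hv1.
  move: (Hlt isT); rewrite -/rcB; case: (HvalB_i _ Hz2 Hv2) => [Hp2|->]; move: Hp1; 
    [move: Hp2|]; case: (nth _ rcB m1) => k1 j1; try case: (nth _ rcB m2) => k2 j2;
    rewrite /ltc /y0 /=; lia.
have Hkf : kashiwara_f_word i uB = Some (set_nth 0 uB nB i.+1) by apply: kf_pos.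
rewrite /young_f -/T -/B -/uB Hkf /=; congr Some.
set T' := map snd (refill B (set_nth 0 uB nB i.+1)).
have HT'sz : size T' = MS S by rewrite /T' size_refill size_young.
apply: (@eq_from_nth _ [::]).
  by rewrite HT'sz size_xi HQ'size.
rewrite size_xi HQ'size => k Hk.
rewrite nth_xi HQ'size //.
rewrite /T' refill_nth ?size_young ?HTsz // young_nth ?HTsz //= /T size_nth_xi //.
apply/eq_in_map => j; rewrite mem_iota /= => Hj.
have [Hc Hv] := HBcellP k j Hk Hj.
have /andP [Hkc _] : (k < csS S j) && (j < NS S) by rewrite -Lk_lt.
have [Hm Hjm] := Hsel _ _ Hkc.
rewrite HQ'entry // refill_set_val -/rcB ?index_mem // nth_index // Hv.
rewrite /y0 xpair_eqE; case: (eqVneq j p) => [Ejp|Njp]; last by rewrite !andbF.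
subst j; rewrite !andbT; congr (if _ then _ else _).
apply/eqP/eqP => [E|->]; last exact: Hselk0.
by rewrite /k0 -E sel_index.
Qed.

Theorem corollary6p3 (Q : seq (seq nat)) :
  is_qrt Q ->
  is_young (xi Q) /\
  (forall i : nat, 0 < i -> qr_f i Q != None ->
     omap xi (qr_f i Q) = young_f i (xi Q)).
Proof. move=> Hq; split; first exact: xi_young. move=> i _; exact: main_part2. Qed.
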